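(* Fix a step $h$ and write $\widehat{\Theta}_0:=\widehat{\Theta}_0^\top(h)=\frac1K\sum_{t=1}^T\Psi_{t}^\top Y_{t}e_t^\top\in\mathbb{R}^{d\times T}$ and $\sigma^\star_{\min}:=\sigma^\star_{\min}(h)$. There is an absolute constant $c>0$ such that for every $\delta_0>0$, with probability at least $1-\exp\!\big[(T+d)-c\,\epsilon_3^2\delta_0^2K\frac{\zeta^4}{d^2}\sigma^{\star2}_{\min}\big]$ with $\epsilon_3=0.1$, $$\big\|\widehat{\Theta}_0-\mathbb{E}[\widehat{\Theta}_0]\big\|\le 0.1\,\delta_0\frac{\zeta^2}{d}\sigma^\star_{\min},$$ where $\|\cdot\|$ is the spectral norm.
   Context: Setting: $T$ tasks, each a finite-horizon episodic MDP with common finite state space, finite action space, horizon $H$, common transitions, and deterministic rewards $R_{ht}(s,a)=\langle\theta^\star_{ht},\psi(s,a)\rangle\in[0,1]$, with $\psi:\mathcal S\times\mathcal A\to\mathbb{R}^d$, $\|\psi(s,a)\|\le1$, $\|\theta^\star_{ht}\|\le\sqrt d$. $\Theta^\star_h\in\mathbb{R}^{T\times d}$ has $t$-th row $\theta^{\star\top}_{ht}$, rank $r\le\frac12\min(T,d)$, and $\sigma^\star_{\min}(h)$ is its smallest nonzero singular value. For each task $t$ and $k=1,\dots,K$ one episode is run under a fixed exploration policy; at step $h$ one records $\psi_{tk}=\psi(s_h,a_h)$ and $y_{tk}=\langle\theta^\star_{ht},\psi_{tk}\rangle$. $Y_t=[y_{t1},\dots,y_{tK}]^\top$, $\Psi_t\in\mathbb{R}^{K\times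 d}$ has rows $\psi_{tk}^\top$, $e_t\in\mathbb{R}^T$ standard basis vector. The exploration policy is such that the $\psi_{tk}$ are i.i.d. with $\|\psi_{tk}\|\le1$ a.s. and there exist $\zeta,\xi>0$ with $\mathbb{E}|\langle\psi_{tk},x\rangle|\ge\zeta/\sqrt d$ and $\mathbb{E}[\psi_{tk}\psi_{tk}^\top]\preceq\frac{1}{d\xi^2}I$ for all unit $x\in\mathbb{R}^d$. *)

(* Defs.v *)
From HB Require Import structures.
From mathcomp Require Import all_boot all_order all_algebra.
From mathcomp Require Import boolp classical_sets reals.
From mathcomp Require Import sequences exp.
Set Implicit Arguments. Unset Strict Implicit. Unset Printing Implicit Defensive.
Import Order.TTheory GRing.Theory Num.Theory.
Local Open Scope ring_scope.
Local Open Scope classical_set_scope.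

Section Defs.
Variable R : realType.

Definition enorm m n (v : 'M[R]_(m, n)) : R :=
  Num.sqrt (\sum_(i < m) \sum_(j < n) v i j ^+ 2).

Definition dotr n (u v : 'rV[R]_n) : R := \sum_(j < n) u 0 j * v 0 j.

Definition specnorm m n (A : 'M[R]_(m, n)) : R :=
  sup [set enorm (A *m x) | x in [set x : 'cV[R]_n | enorm x <= 1]].

(* Smallest nonzero singular value: the nonzero singular values of A are the
   s > 0 such that s^2 is an eigenvalue of A^T A. *)
Definition sigma_min_nz m n (A : 'M[R]_(m, n)) : R :=
  inf [set s : R | 0 < s /\ eigenvalue (A^T *m A) (s ^+ 2)].

Definition loewner_le n (A B : 'M[R]_n) : Prop :=
  forall x : 'cV[R]_n, (x^T *m A *m x) 0 0 <= (x^T *m B *m x) 0 0.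

(* A sample omega records, for every task t and episode k, the state-action
   pair (s_h, a_h) visited at step h.  The pairs are i.i.d. with law p, so the
   probability of omega is the product of p over all (t,k). *)
Variables (S A : finType) (T d K : nat).
Variable (psi : S * A -> 'rV[R]_d).
Variable (Theta : 'M[R]_(T, d)).      (* Theta*_h, t-th row = theta*_{ht}^T *)
Variable (p : {ffun S * A -> R}).     (* law of (s_h, a_h) under exploration *)

Definition sample := {ffun 'I_T * 'I_K -> S * A}.

Definition prob (w : sample) : R := \prod_(tk : 'I_T * 'I_K) p (w tk).

Definition Prob (E : pred sample) : R := \sum_(w : sample | E w) prob w.

Definition Expect_mx m n (F : sample -> 'M[R]_(m, n)) : 'M[R]_(m, n) :=
  \sum_(w : sample) prob w *: F w.

Definition psi_tk (w : sample) (t : 'I_T) (k : 'I_K) : 'rV[R]_d := psi (w (t, k)).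

Definition Psi_t (w : sample) (t : 'I_T) : 'M[R]_(K, d) :=
  \matrix_(k < K, j < d) psi_tk w t k 0 j.

Definition Y_t (w : sample) (t : 'I_T) : 'cV[R]_K :=
  \col_(k < K) dotr (row t Theta) (psi_tk w t k).

Definition e_vec (t : 'I_T) : 'cV[R]_T := delta_mx t 0.

Definition Theta_hat0 (w : sample) : 'M[R]_(d, T) :=
  (K%:R)^-1 *: \sum_(t < T) ((Psi_t w t)^T *m Y_t w t *m (e_vec t)^T).

Definition E_abs_dot (x : 'rV[R]_d) : R :=
  \sum_(sa : S * A) p sa * `|dotr (psi sa) x|.

Definition E_outer : 'M[R]_d :=
  \sum_(sa : S * A) p sa *: ((psi sa)^T *m psi sa).

End Defs.

(* Main.v *)
Require Import Defs.
From HB Require Import structures.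
From mathcomp Require Import all_boot all_order all_algebra.
From mathcomp Require Import boolp classical_sets reals.
From mathcomp Require Import sequences exp.
From mathcomp Require Import ring lra.
Import Order.TTheory GRing.Theory Num.Theory.
Set Implicit Arguments. Unset Strict Implicit. Unset Printing Implicit Defensive.
Local Open Scope ring_scope.

Section Gen.
Variable R : realType.

Lemma CSg n (a b : 'I_n -> R) :
  (\sum_i a i * b i) ^+ 2 <= (\sum_i a i ^+ 2) * (\sum_i b i ^+ 2).
Proof.
set Sa := \sum_i a i ^+ 2; set Sb := \sum_i b i ^+ 2; set Sab := \sum_i a i * b i.
have Sa0 : 0 <= Sa by apply: sumr_ge0 => i _; exact: sqr_ge0.
have Sb0 : 0 <= Sb by apply: sumr_ge0 => i _; exact: sqr_ge0.
have H : 0 <= \sum_i (Sa * b i - Sab * a i) ^+ 2 by apply: sumr_ge0 => i _; exact: sqr_ge0.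
have E : \sum_i (Sa * b i - Sab * a i) ^+ 2 = Sa * (Sa * Sb - Sab ^+ 2).
  rewrite (eq_bigr (fun i => Sa ^+ 2 * b i ^+ 2 - (2 * Sa * Sab) * (a i * b i) + Sab ^+ 2 * a i ^+ 2)); last by move=> i _; ring.
  rewrite big_split /= sumrB -!mulr_sumr -/Sa -/Sb -/Sab; ring.
rewrite E in H.
have [Sa_eq0|Sa_gt0] := eqVneq Sa 0.
  have ha : forall i, a i = 0.
    move=> i; apply/eqP; rewrite -sqrf_eq0 eq_le sqr_ge0 andbT.
    rewrite -Sa_eq0 /Sa (bigD1 i) //= lerDl; apply: sumr_ge0 => j _; exact: sqr_ge0.
  rewrite /Sab big1 ?expr0n //=; first by rewrite mulr_ge0.
  by move=> i _; rewrite ha mul0r.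
have Sa_pos : 0 < Sa by rewrite lt_def Sa_gt0 Sa0.
by rewrite -subr_ge0; rewrite pmulr_rge0 in H.
Qed.

Lemma exp_le (y : R) : y <= 1/2 -> expR y <= 1 + y + 2 * y ^+ 2.
Proof.
move=> hy.
have h1 : 1 - y <= expR (- y) by have := expR_ge1Dx (- y); rewrite -[1 - y]/(1 + - y).
have hpos : 0 < 1 - y by lra.
rewrite -[expR y]invrK -expRN.
have -> : 1 + y + 2 * y ^+ 2 = (1 - y)^-1 * ((1 - y) * (1 + y + 2 * y ^+ 2)).
  by rewrite mulKf // gt_eqF.
apply: (@le_trans _ _ ((1 - y)^-1)).
  by rewrite lef_pV2 ?posrE ?expR_gt0.
rewrite -{1}[(1 - y)^-1]mulr1; apply: ler_wpM2l; first by rewrite invr_ge0 ltW.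
have : 0 <= y ^+ 2 * (1 - 2 * y) by apply: mulr_ge0; [exact: sqr_ge0| lra].
move=> h; have -> : (1 - y) * (1 + y + 2 * y ^+ 2) = 1 + y ^+ 2 * (1 - 2 * y) by ring.
lra.
Qed.


Definition nsq d (v : 'rV[R]_d) : R := \sum_j v 0 j ^+ 2.
Definition dt d (u v : 'rV[R]_d) : R := \sum_j u 0 j * v 0 j.

Lemma nsq_ge0 d (v : 'rV[R]_d) : 0 <= nsq v.
Proof. by apply: sumr_ge0 => j _; exact: sqr_ge0. Qed.

Lemma nsqD d (v w : 'rV[R]_d) : nsq (v + w) = nsq v + 2 * dt v w + nsq w.
Proof.
rewrite /nsq /dt mulr_sumr -!big_split /=; apply: eq_bigr => j _.
rewrite mxE; ring.
Qed.

Lemma CSr d (v w : 'rV[R]_d) : dt v w ^+ 2 <= nsq v * nsq w.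
Proof. exact: CSg. Qed.

Lemma nsq_bound_dot d (v w : 'rV[R]_d) B C : 0 <= B -> 0 <= C ->
  nsq v <= B ^+ 2 -> nsq w <= C ^+ 2 -> nsq (v + w) <= (B + C) ^+ 2.
Proof.
move=> B0 C0 hv hw; rewrite nsqD.
have h := CSr v w.
have hvw : nsq v * nsq w <= (B * C) ^+ 2.
  by rewrite exprMn; apply: ler_pM => //; apply: nsq_ge0.
have hd : dt v w <= B * C.
  have hh : dt v w ^+ 2 <= (B * C) ^+ 2 by apply: le_trans hvw.
  have BC0 : 0 <= B * C by apply: mulr_ge0.
  by have := hh; rewrite -ler_sqrt ?sqr_ge0 // !sqrtr_sqr => /(le_trans (ler_norm _)) /le_trans; apply; rewrite ger0_norm.
nra.
Qed.

Lemma nsq_sum n d (G : 'I_n -> 'rV[R]_d) :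
  (forall k, nsq (G k) <= 4) -> nsq (\sum_k G k) <= 4 * n%:R ^+ 2.
Proof.
elim: n G => [|n IH] G hG.
  rewrite big_ord0 /nsq big1; first by rewrite mulr_ge0 // sqr_ge0.
  by move=> j _; rewrite mxE expr0n.
rewrite big_ord_recl addrC.
have -> : 4 * (n.+1)%:R ^+ 2 = (2 * n%:R + 2) ^+ 2 :> R by rewrite -natr1; ring.
apply: nsq_bound_dot.
- by apply: mulr_ge0 => //; apply: ler0n.
- by [].
- have -> : (2 * n%:R) ^+ 2 = 4 * n%:R ^+ 2 :> R by ring.
  by apply: IH => k; apply: hG.
- by have -> : (2 : R) ^+ 2 = 4 by ring.
Qed.

Section Iter.
Variables (J : finType) (p : J -> R) (d : nat) (z : J -> 'rV[R]_d).
Hypotheses (hp0 : forall x, 0 <= p x) (hp1 : \sum_x p x = 1)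
  (hz : forall x, nsq (z x) <= 4) (hmean : forall j, \sum_x p x * z x 0 j = 0).

Lemma dot_mean (v : 'rV[R]_d) : \sum_x p x * dt v (z x) = 0.
Proof.
rewrite /dt; under eq_bigr do rewrite mulr_sumr.
rewrite exchange_big /=; apply: big1 => j _.
rewrite (eq_bigr (fun x => v 0 j * (p x * z x 0 j))); last by move=> x _; ring.
by rewrite -mulr_sumr hmean mulr0.
Qed.

Lemma step (v : 'rV[R]_d) (a N : R) : 0 <= a -> 0 <= N -> nsq v <= 4 * N ^+ 2 ->
  16 * a * N <= 1 ->
  \sum_x p x * expR (a * nsq (v + z x)) <= expR ((a + 32 * a ^+ 2) * nsq v + 4 * a).
Proof.
move=> a0 N0 hv haN.
have hv0 := nsq_ge0 v.
have E x : p x * expR (a * nsq (v + z x)) <=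
    expR (a * nsq v + 4 * a) * (p x * (1 + 2 * a * dt v (z x) + 2 * (2 * a * dt v (z x)) ^+ 2)).
  have hzx := hz x; have hz0 := nsq_ge0 (z x).
  have hcs := CSr v (z x).
  set y := 2 * a * dt v (z x).
  have hy2 : y ^+ 2 <= 16 * a ^+ 2 * nsq v.
    have -> : y ^+ 2 = 4 * a ^+ 2 * dt v (z x) ^+ 2 by rewrite /y; ring.
    have -> : 16 * a ^+ 2 * nsq v = 4 * a ^+ 2 * (nsq v * 4) by ring.
    apply: ler_wpM2l; first by apply: mulr_ge0 => //; exact: sqr_ge0.
    by apply: le_trans hcs _; apply: ler_wpM2l.
  have hy : y <= 1 / 2.
    have : y ^+ 2 <= (1 / 2) ^+ 2.
      apply: le_trans hy2 _.
      have : 16 * a ^+ 2 * nsq v <= 16 * a ^+ 2 * (4 * N ^+ 2).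
        by apply: ler_wpM2l => //; apply: mulr_ge0 => //; exact: sqr_ge0.
      move=> h; apply: le_trans h _.
      have -> : 16 * a ^+ 2 * (4 * N ^+ 2) = (16 * a * N) ^+ 2 / 4 by field.
      have : (16 * a * N) ^+ 2 <= 1.
        have h0 : 0 <= 16 * a * N by apply: mulr_ge0 => //; apply: mulr_ge0.
        nra.
      move=> h1; lra.
    move=> h; nra.
  have -> : expR (a * nsq v + 4 * a) * (p x * (1 + y + 2 * y ^+ 2)) =
     p x * (expR (a * nsq v) * (expR (4 * a) * (1 + y + 2 * y ^+ 2))) by rewrite expRD; ring.
  apply: ler_wpM2l => //.
  rewrite nsqD.
  have -> : a * (nsq v + 2 * dt v (z x) + nsq (z x)) = (a * nsq v) + y + a * nsq (z x).
    by rewrite /y; ring.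
  rewrite !expRD -mulrA.
  apply: ler_wpM2l; first exact: expR_ge0.
  rewrite mulrC.
  apply: ler_pM; [exact: expR_ge0|exact: expR_ge0| |].
    by rewrite ler_expR [4 * a]mulrC; apply: ler_wpM2l.
  exact: exp_le.
apply: le_trans (ler_sum _ (fun x _ => E x)) _.
rewrite -mulr_sumr.
rewrite (eq_bigr (fun x => p x + 2 * a * (p x * dt v (z x)) + 8 * a ^+ 2 * (p x * dt v (z x) ^+ 2))); last by move=> x _; ring.
rewrite !big_split /= -!mulr_sumr dot_mean hp1 mulr0 addr0.
have hs : \sum_x p x * dt v (z x) ^+ 2 <= 4 * nsq v.
  apply: le_trans (ler_sum _ (fun x _ => ler_wpM2l (hp0 x) (le_trans (CSr v (z x)) (ler_wpM2l hv0 (hz x))))) _.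
  by rewrite -mulr_suml hp1 mul1r mulrC.
have -> : (a + 32 * a ^+ 2) * nsq v + 4 * a = (a * nsq v + 4 * a) + 32 * a ^+ 2 * nsq v by ring.
rewrite [X in _ <= X]expRD; apply: ler_wpM2l; first exact: expR_ge0.
apply: le_trans (expR_ge1Dx _); rewrite lerD2l.
have : 8 * a ^+ 2 * (\sum_x p x * dt v (z x) ^+ 2) <= 8 * a ^+ 2 * (4 * nsq v).
  by apply: ler_wpM2l => //; apply: mulr_ge0 => //; exact: sqr_ge0.
move=> h; apply: le_trans h _; rewrite le_eqVlt; apply/orP; left; apply/eqP; ring.
Qed.

Lemma nsq0 : nsq (0 : 'rV[R]_d) = 0.
Proof. by rewrite /nsq big1 // => j _; rewrite mxE expr0n. Qed.

Definition fcons n (x : J) (g : {ffun 'I_n -> J}) : {ffun 'I_n.+1 -> J} :=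
  [ffun i => if unlift ord0 i is Some j then g j else x].
Definition ftail n (f : {ffun 'I_n.+1 -> J}) : {ffun 'I_n -> J} :=
  [ffun j => f (lift ord0 j)].

Lemma fcons0 n x (g : {ffun 'I_n -> J}) : fcons x g ord0 = x.
Proof. by rewrite /fcons ffunE unlift_none. Qed.

Lemma fconsS n x (g : {ffun 'I_n -> J}) j : fcons x g (lift ord0 j) = g j.
Proof. by rewrite /fcons ffunE liftK. Qed.

Lemma sum_fcons n (F : {ffun 'I_n.+1 -> J} -> R) :
  \sum_f F f = \sum_x \sum_(g : {ffun 'I_n -> J}) F (fcons x g).
Proof.
rewrite pair_bigA /= (reindex (fun q : J * {ffun 'I_n -> J} => fcons q.1 q.2)) //.
apply: onW_bij; exists (fun f : {ffun 'I_n.+1 -> J} => (f ord0, ftail f)).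
- case=> x g /=; congr pair; first by rewrite fcons0.
  by apply/ffunP => j; rewrite ffunE fconsS.
- move=> f /=; apply/ffunP => i; rewrite /fcons ffunE.
  by case: unliftP => [j ->|->] //; rewrite ffunE.
Qed.

Lemma iter n : forall a, 0 <= a -> 64 * a * n%:R <= 1 ->
  \sum_(f : {ffun 'I_n -> J}) (\prod_k p (f k)) * expR (a * nsq (\sum_k z (f k)))
    <= expR (8 * a * n%:R).
Proof.
elim: n => [|n IH] a a0 ha.
  rewrite (eq_bigr (fun _ => 1)); last first.
    by move=> f _; rewrite !big_ord0 nsq0 mulr0 expR0 mulr1.
  by rewrite sumr_const card_ffun card_ord expn0 mulr0 expR0.
rewrite sum_fcons.
have E x (g : {ffun 'I_n -> J}) :
    (\prod_k p (fcons x g k)) * expR (a * nsq (\sum_k z (fcons x g k))) =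
    (\prod_k p (g k)) * (p x * expR (a * nsq (\sum_k z (g k) + z x))).
  rewrite !big_ord_recl fcons0.
  rewrite (eq_bigr (fun i => p (g i))); last by move=> i _; rewrite fconsS.
  rewrite (eq_bigr (fun i => z (g i))); last by move=> i _; rewrite fconsS.
  rewrite [z x + _]addrC; ring.
under eq_bigr do under eq_bigr do rewrite E.
rewrite exchange_big /=.
have N0 : 0 <= n%:R :> R by apply: ler0n.
have Nn : 64 * a * n%:R <= 1.
  apply: le_trans ha; apply: ler_wpM2l; first by apply: mulr_ge0.
  by rewrite ler_nat.
set a' := a + 32 * a ^+ 2.
apply: (@le_trans _ _ (\sum_(g : {ffun 'I_n -> J}) (\prod_k p (g k)) * expR (a' * nsq (\sum_k z (g k)) + 4 * a))).
  apply: ler_sum => g _; rewrite -mulr_sumr; apply: ler_wpM2l.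
    by apply: prodr_ge0 => k _.
  apply: (@step _ _ n%:R) => //.
    exact: nsq_sum.
  lra.
under eq_bigr do rewrite expRD mulrA.
rewrite -mulr_suml.
have a'0 : 0 <= a' by rewrite /a'; apply: addr_ge0 => //; apply: mulr_ge0 => //; exact: sqr_ge0.
have ha' : 64 * a' * n%:R <= 1.
  rewrite /a'; rewrite -natr1 in ha; nra.
apply: le_trans (ler_wpM2r (expR_ge0 _) (IH a' a'0 ha')) _.
rewrite -expRD ler_expR /a' -natr1; nra.
Qed.

End Iter.
Section Prod.
Variables (I J : finType) (p : J -> R).
Hypothesis hp1 : \sum_x p x = 1.

Lemma marginal (i0 : I) (h : J -> R) :
  \sum_(w : {ffun I -> J}) (\prod_i p (w i)) * h (w i0) = \sum_x p x * h x.
Proof.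
pose F i x := p x * (if i == i0 then h x else 1).
have L := @bigA_distr_bigA R 0 1 *%R +%R I J F.
have E1 : \prod_i \sum_x F i x = \sum_x p x * h x.
  rewrite (bigD1 i0) //= [X in _ * X]big1 ?mulr1.
    by apply: eq_bigr => x _; rewrite /F eqxx.
  by move=> i /negbTE hi; rewrite /F; under eq_bigr do rewrite hi mulr1.
rewrite -E1 L; apply: eq_bigr => w _.
rewrite /F big_split /=; congr (_ * _).
rewrite (bigD1 i0) //= eqxx big1 ?mulr1 //.
by move=> i /negbTE ->.
Qed.

Lemma total : \sum_(w : {ffun I -> J}) \prod_i p (w i) = 1.
Proof.
have L := @bigA_distr_bigA R 0 1 *%R +%R I J (fun _ x => p x).
rewrite -L; under eq_bigr do rewrite hp1.
by rewrite big1.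
Qed.
Lemma curry_prod (I1 I2 : finType) (G : I1 -> {ffun I2 -> J} -> R) :
  \sum_(w : {ffun I1 * I2 -> J}) (\prod_i p (w i)) * \prod_t G t [ffun k => w (t, k)]
  = \prod_t \sum_(f : {ffun I2 -> J}) (\prod_k p (f k)) * G t f.
Proof.
rewrite (@bigA_distr_bigA R 0 1 *%R +%R I1 {ffun I2 -> J}).
rewrite (reindex (fun W : {ffun I1 -> {ffun I2 -> J}} => [ffun tk : I1 * I2 => W tk.1 tk.2])) /=.
  apply: eq_bigr => W _.
  rewrite big_split /=; congr (_ * _).
    rewrite (pair_bigA _ (fun t k => p (W t k))) /=; apply: eq_bigr => -[t k] _; by rewrite ffunE.
  apply: eq_bigr => t _; congr (G t _); apply/ffunP => k; by rewrite !ffunE.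
apply: onW_bij; exists (fun w : {ffun I1 * I2 -> J} => [ffun t => [ffun k => w (t, k)]]).
  move=> W; apply/ffunP => t; apply/ffunP => k; by rewrite !ffunE.
move=> w; apply/ffunP => -[t k]; by rewrite !ffunE.
Qed.

End Prod.

Lemma specnorm_fro m n (M : 'M[R]_(m, n)) :
  specnorm M <= Num.sqrt (\sum_i \sum_j M i j ^+ 2).
Proof.
apply: ge_sup.
  exists (enorm (M *m (0 : 'cV[R]_n))), 0 => //.
  rewrite /= /enorm big1 ?sqrtr0 ?ler01 // => i _; rewrite big1 // => j _; by rewrite mxE expr0n.
move=> _ [x hx <-].
rewrite /enorm ler_wsqrtr //.
have hx1 : \sum_k x k 0 ^+ 2 <= 1.
  have h : Num.sqrt (\sum_i \sum_(j < 1) x i j ^+ 2) <= Num.sqrt 1 by rewrite sqrtr1; exact: hx.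
  move: h; rewrite ler_sqrt // => h; apply: (le_trans _ h).
  by rewrite le_eqVlt; apply/orP; left; apply/eqP; apply: eq_bigr => k _; rewrite big_ord1.
apply: ler_sum => i _; rewrite big_ord1 mxE.
apply: le_trans (CSg _ _) _.
rewrite -[X in _ <= X]mulr1; apply: ler_wpM2l => //.
by apply: sumr_ge0 => j _; exact: sqr_ge0.
Qed.

End Gen.

Section Model.
Variables (R : realType) (S A : finType) (T d K : nat).
Variables (psi : S * A -> 'rV[R]_d) (Theta : 'M[R]_(T, d)) (p : {ffun S * A -> R}).
Hypotheses (K0 : (0 < K)%N) (hp0 : forall sa, 0 <= p sa) (hp1 : \sum_sa p sa = 1).
Hypotheses (hpsi : forall sa, enorm (psi sa) <= 1)
  (hrew : forall (t : 'I_T) sa, 0 <= dotr (row t Theta) (psi sa) <= 1).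

Lemma subE m n (M N : 'M[R]_(m, n)) i j : (M - N) i j = M i j - N i j.
Proof. by rewrite !mxE. Qed.

Definition gg (t : 'I_T) sa : 'rV[R]_d := dotr (row t Theta) (psi sa) *: psi sa.
Definition mu (t : 'I_T) : 'rV[R]_d := \sum_sa p sa *: gg t sa.
Definition zz (t : 'I_T) sa : 'rV[R]_d := gg t sa - mu t.

Lemma TH_entry w j t :
  Theta_hat0 psi Theta (K:=K) w j t = K%:R^-1 * \sum_k gg t (w (t, k)) 0 j.
Proof.
rewrite /Theta_hat0 mxE summxE; congr (_ * _).
rewrite (bigD1 t) //= big1 ?addr0.
  rewrite mxE big_ord1 /e_vec trmx_delta [delta_mx _ _ _ _]mxE !eqxx /= mulr1 mxE.
  by apply: eq_bigr => k _; rewrite !mxE /psi_tk mulrC.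
move=> i hi; rewrite mxE big_ord1 /e_vec trmx_delta [delta_mx _ _ _ _]mxE (eq_sym t) (negbTE hi) andbF mulr0.
by [].
Qed.

Lemma ETH_entry j t :
  Expect_mx p (Theta_hat0 psi Theta (K:=K)) j t = mu t 0 j.
Proof.
rewrite /Expect_mx summxE.
under eq_bigr do rewrite mxE TH_entry mulr_sumr.
under eq_bigr do rewrite mulr_sumr.
rewrite exchange_big /=.
have E (k : 'I_K) : \sum_w prob p w * (K%:R^-1 * gg t (w (t, k)) 0 j) = K%:R^-1 * mu t 0 j.
  rewrite /prob.
  under eq_bigr do rewrite mulrCA.
  rewrite -mulr_sumr; congr (_ * _).
  rewrite (marginal hp1 (t, k) (fun x => gg t x 0 j)).
  by rewrite /mu summxE; apply: eq_bigr => x _; rewrite [RHS]mxE.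
under eq_bigr do rewrite E.
have hK : K%:R != 0 :> R by rewrite pnatr_eq0 -lt0n.
rewrite sumr_const card_ord -[_ *+ K]mulr_natr mulrAC mulVf // mul1r.
reflexivity.
Qed.

Lemma M_entry w j t :
  (Theta_hat0 psi Theta (K:=K) w - Expect_mx p (Theta_hat0 psi Theta (K:=K))) j t
  = K%:R^-1 * (\sum_k zz t (w (t, k))) 0 j.
Proof.
rewrite subE TH_entry ETH_entry summxE.
have hK : K%:R != 0 :> R by rewrite pnatr_eq0 -lt0n.
rewrite [in RHS](eq_bigr (fun k => gg t (w (t, k)) 0 j - mu t 0 j)); last first.
  by move=> k _; rewrite /zz subE.
rewrite sumrB sumr_const card_ord mulrBr -(mulr_natr (mu t 0 j) K) mulrCA mulVf // mulr1.
reflexivity.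
Qed.

Lemma nsq_psi sa : nsq (psi sa) <= 1.
Proof.
have h : Num.sqrt (\sum_(i < 1) \sum_j psi sa i j ^+ 2) <= Num.sqrt 1 by rewrite sqrtr1; exact: hpsi.
move: h; rewrite ler_sqrt // big_ord1 => h; apply: (le_trans _ h).
by rewrite le_eqVlt eqxx.
Qed.

Lemma nsqZ (c : R) (v : 'rV[R]_d) : nsq (c *: v) = c ^+ 2 * nsq v.
Proof. by rewrite /nsq mulr_sumr; apply: eq_bigr => j _; rewrite mxE exprMn. Qed.

Lemma nsq_gg t sa : nsq (gg t sa) <= 1.
Proof.
rewrite /gg nsqZ; have [h0 h1] := andP (hrew t sa).
have hp := nsq_psi sa; have hn := nsq_ge0 (psi sa).
set c := dotr _ _ in h0 h1 *.
have hc : c ^+ 2 <= 1 by nra.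
have : c ^+ 2 * nsq (psi sa) <= 1 * 1 by apply: ler_pM => //; exact: sqr_ge0.
by rewrite mulr1.
Qed.

Lemma nsq_mu t : nsq (mu t) <= 1.
Proof.
set m := nsq (mu t).
have Em : m = \sum_x p x * dt (mu t) (gg t x).
  rewrite /m /nsq /dt.
  under [RHS]eq_bigr do rewrite mulr_sumr.
  rewrite exchange_big /=; apply: eq_bigr => j _.
  rewrite expr2 {2}/mu summxE mulr_sumr; apply: eq_bigr => x _; rewrite mxE; ring.
have m0 : 0 <= m by exact: nsq_ge0.
have hx x : p x * dt (mu t) (gg t x) <= p x * ((m + 1) / 2).
  apply: ler_wpM2l => //.
  have h := CSr (mu t) (gg t x).
  have h2 : nsq (mu t) * nsq (gg t x) <= m.
    by rewrite -[X in _ <= X]mulr1; apply: ler_wpM2l => //; exact: nsq_gg.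
  rewrite -/m in h h2.
  set D := dt (mu t) (gg t x) in h *.
  have h3 : D ^+ 2 <= m by apply: le_trans h h2.
  have h4 : 0 <= (D - 1) ^+ 2 by exact: sqr_ge0.
  have e : (D - 1) ^+ 2 = D ^+ 2 - 2 * D + 1 by ring.
  rewrite e in h4.
  lra.
have : m <= (m + 1) / 2.
  by rewrite {1}Em; apply: le_trans (ler_sum _ (fun x _ => hx x)) _; rewrite -mulr_suml hp1 mul1r.
lra.
Qed.

Lemma nsq_zz t sa : nsq (zz t sa) <= 4.
Proof.
have -> : (4 : R) = (1 + 1) ^+ 2 by ring.
apply: nsq_bound_dot => //.
- by rewrite expr1n; exact: nsq_gg.
- rewrite expr1n; apply: le_trans (nsq_mu t).
  by rewrite /nsq le_eqVlt; apply/orP; left; apply/eqP; apply: eq_bigr => j _; rewrite mxE sqrrN.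
Qed.

Lemma mean_zz t j : \sum_x p x * zz t x 0 j = 0.
Proof.
rewrite (eq_bigr (fun x => p x * gg t x 0 j - p x * mu t 0 j)); last first.
  by move=> x _; rewrite /zz subE; ring.
rewrite sumrB -mulr_suml hp1 mul1r /mu summxE.
rewrite [X in _ - X](eq_bigr (fun x => p x * gg t x 0 j)) ?subrr // => x _.
by rewrite [LHS]mxE.
Qed.

Definition SS (t : 'I_T) (w : sample S A T K) : 'rV[R]_d := \sum_k zz t (w (t, k)).

Lemma fro_eq w :
  \sum_i \sum_j (Theta_hat0 psi Theta (K:=K) w - Expect_mx p (Theta_hat0 psi Theta (K:=K))) i j ^+ 2
  = K%:R^-1 ^+ 2 * \sum_t nsq (SS t w).
Proof.
under eq_bigr do under eq_bigr do rewrite M_entry exprMn.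
rewrite exchange_big /= mulr_sumr; apply: eq_bigr => t _.
by rewrite /nsq mulr_sumr /SS.
Qed.

Lemma tail (u : R) : 0 <= u ->
  \sum_(w : sample S A T K | ~~ (specnorm (Theta_hat0 psi Theta (K:=K) w
            - Expect_mx p (Theta_hat0 psi Theta (K:=K))) <= u)) prob p w
  <= expR (T%:R / 8 - K%:R * u ^+ 2 / 64).
Proof.
move=> u0.
have Kpos : 0 < K%:R :> R by rewrite ltr0n.
set a : R := (64 * K%:R)^-1.
have a0 : 0 <= a by rewrite /a invr_ge0; apply: mulr_ge0 => //; apply: ltW.
set F := fun w : sample S A T K => a * \sum_t nsq (SS t w) - a * (K%:R ^+ 2 * u ^+ 2).
have prob0 w : 0 <= prob p w by apply: prodr_ge0 => i _.
have step1 : \sum_(w : sample S A T K | ~~ (specnorm (Theta_hat0 psi Theta (K:=K) w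
            - Expect_mx p (Theta_hat0 psi Theta (K:=K))) <= u)) prob p w
    <= \sum_(w : sample S A T K | ~~ (specnorm (Theta_hat0 psi Theta (K:=K) w
            - Expect_mx p (Theta_hat0 psi Theta (K:=K))) <= u)) prob p w * expR (F w).
  apply: ler_sum => w hw.
  rewrite -[X in X <= _]mulr1; apply: ler_wpM2l => //.
  rewrite -expR0 ler_expR /F subr_ge0.
  apply: ler_wpM2l => //.
  have hs := specnorm_fro (Theta_hat0 psi Theta (K:=K) w - Expect_mx p (Theta_hat0 psi Theta (K:=K))).
  rewrite fro_eq in hs.
  set X := \sum_t nsq (SS t w) in hs *.
  have X0 : 0 <= X by apply: sumr_ge0 => t _; exact: nsq_ge0.
  have hlt : u < Num.sqrt (K%:R^-1 ^+ 2 * X).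
    by apply: lt_le_trans hs; rewrite ltNge.
  have hsq : u ^+ 2 < K%:R^-1 ^+ 2 * X.
    have Y0 : 0 <= K%:R^-1 ^+ 2 * X by apply: mulr_ge0 => //; exact: sqr_ge0.
    rewrite -(sqr_sqrtr Y0).
    have := sqrtr_ge0 (K%:R^-1 ^+ 2 * X).
    move: hlt; set q := Num.sqrt _ => hlt hq; nra.
  have hK2 : 0 < K%:R ^+ 2 :> R by apply: exprn_gt0.
  have : K%:R ^+ 2 * u ^+ 2 <= K%:R ^+ 2 * (K%:R^-1 ^+ 2 * X).
    by apply: ler_wpM2l; [apply: ltW | apply: ltW].
  have e : K%:R ^+ 2 * (K%:R^-1 ^+ 2 * X) = X by field; rewrite gt_eqF.
  by rewrite e.
apply: le_trans step1 _.
apply: le_trans (_ : \sum_(w : sample S A T K) prob p w * expR (F w) <= _).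
  rewrite [X in _ <= X](bigID (fun w => ~~ (specnorm (Theta_hat0 psi Theta (K:=K) w
            - Expect_mx p (Theta_hat0 psi Theta (K:=K))) <= u))) /=.
  rewrite lerDl; apply: sumr_ge0 => w _; apply: mulr_ge0 => //; exact: expR_ge0.
have E w : prob p w * expR (F w) = expR (- (a * (K%:R ^+ 2 * u ^+ 2))) *
    ((\prod_i p (w i)) * \prod_t (fun t f => expR (a * nsq (\sum_k zz t (f k)))) t [ffun k => w (t, k)]).
  rewrite /F /prob addrC expRD mulr_sumr expR_sum mulrCA; congr (_ * (_ * _)).
  by apply: eq_bigr => t _; rewrite /SS; congr (expR (a * nsq _)); apply: eq_bigr => k _; rewrite ffunE.
under eq_bigr do rewrite E.
rewrite -mulr_sumr (curry_prod _ (fun t f => expR (a * nsq (\sum_k zz t (f k))))) //.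
have hit t : 0 <= \sum_(f : {ffun 'I_K -> S * A}) (\prod_k p (f k)) * expR (a * nsq (\sum_k zz t (f k)))
    <= expR (8 * a * K%:R).
  apply/andP; split.
    by apply: sumr_ge0 => f _; apply: mulr_ge0; [apply: prodr_ge0 => k _|exact: expR_ge0].
  apply: (iter hp0 hp1 (nsq_zz t) (mean_zz t)) => //.
  by rewrite /a mulrAC mulfV ?mul1r // mulf_neq0 // gt_eqF.
apply: le_trans (ler_wpM2l (expR_ge0 _) (ler_prod _ (fun t _ => hit t))) _.
rewrite prodr_const card_ord -expRM_natl -expRD ler_expR.
have -> : 8 * a * K%:R = 1 / 8 by rewrite /a; field; rewrite gt_eqF.
have -> : a * (K%:R ^+ 2 * u ^+ 2) = K%:R * u ^+ 2 / 64 by rewrite /a; field; rewrite gt_eqF.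
lra.
Qed.

End Model.

Theorem lemma1 (R : realType) :
  exists c : R, 0 < c /\
  forall (S A : finType) (T d K : nat)
         (psi : S * A -> 'rV[R]_d) (Theta : 'M[R]_(T, d))
         (p : {ffun S * A -> R}) (zeta xi : R),
    (0 < K)%N ->
    (* features *)
    (forall sa, enorm (psi sa) <= 1) ->
    (* deterministic rewards in [0,1] and parameter norms *)
    (forall (t : 'I_T) sa, 0 <= dotr (row t Theta) (psi sa) <= 1) ->
    (forall t : 'I_T, enorm (row t Theta) <= Num.sqrt (d%:R)) ->
    (* low rank *)
    (0 < \rank Theta)%N ->
    (2 * \rank Theta <= minn T d)%N ->
    (* exploration law of (s_h, a_h) *)
    (forall sa, 0 <= p sa) -> \sum_sa p sa = 1 ->
    0 < zeta -> 0 < xi ->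
    (forall x : 'rV[R]_d, enorm x = 1 ->
        zeta / Num.sqrt (d%:R) <= E_abs_dot psi p x) ->
    loewner_le (E_outer psi p) ((d%:R * xi ^+ 2)^-1 *: 1%:M) ->
    forall delta0 : R, 0 < delta0 ->
      let eps3 : R := 1 / 10 in
      let smin := sigma_min_nz Theta in
      let TH := Theta_hat0 psi Theta (K:=K) in
      let ETH := Expect_mx p (K:=K) TH in
      1 - expR ((T + d)%:R
                - c * eps3 ^+ 2 * delta0 ^+ 2 * K%:R
                  * (zeta ^+ 4 / (d%:R) ^+ 2) * smin ^+ 2)
      <= Prob p (K:=K)
           (fun w => specnorm (TH w - ETH) <= 1 / 10 * delta0 * (zeta ^+ 2 / d%:R) * smin).
Proof.
exists (1 / 64); split; first by rewrite divr_gt0.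
move=> S A T d K psi Theta p zeta xi K0 hpsi hrew hnorm hrk hrk2 hp0 hp1 z0 xi0 hzeta hloew delta0 d0.
cbv zeta.
set smin := sigma_min_nz Theta.
have smin0 : 0 <= smin.
  rewrite /smin /sigma_min_nz.
  set E := (X in inf X).
  have [ne|e] := pselect (E !=set0)%classic.
    by apply: lb_le_inf => // s [s0 _]; apply: ltW.
  have -> : E = set0.
    by apply/seteqP; split=> s // hs; exfalso; apply: e; exists s.
  by rewrite inf0.
set u := 1 / 10 * delta0 * (zeta ^+ 2 / d%:R) * smin.
have u0 : 0 <= u.
  rewrite /u; apply: mulr_ge0 => //; apply: mulr_ge0; last first.
    by apply: divr_ge0; [exact: sqr_ge0|exact: ler0n].
  by apply: mulr_ge0; [rewrite divr_ge0|apply: ltW].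
have Htot : \sum_(w : sample S A T K) prob p w = 1.
  exact: (@total R ('I_T * 'I_K)%type (S * A)%type (fun x => p x) hp1).
have Ht := tail K0 hp0 hp1 hpsi hrew u0.
rewrite /Prob.
rewrite (bigID (fun w : sample S A T K => specnorm (Theta_hat0 psi Theta (K:=K) w
   - Expect_mx p (Theta_hat0 psi Theta (K:=K))) <= u)) /= in Htot.
have Hm : expR (T%:R / 8 - K%:R * u ^+ 2 / 64) <= expR ((T + d)%:R -
     1 / 64 * (1 / 10) ^+ 2 * delta0 ^+ 2 * K%:R * (zeta ^+ 4 / d%:R ^+ 2) * smin ^+ 2).
  rewrite ler_expR.
  have -> : 1 / 64 * (1 / 10) ^+ 2 * delta0 ^+ 2 * K%:R * (zeta ^+ 4 / d%:R ^+ 2) * smin ^+ 2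
     = K%:R * u ^+ 2 / 64.
    rewrite /u -exprVn; ring.
  rewrite natrD.
  have : 0 <= T%:R :> R by exact: ler0n.
  have : 0 <= d%:R :> R by exact: ler0n.
  lra.
move: Htot Ht Hm; set S1 := bigop _ _ _; set S2 := bigop _ _ _.
move=> h1 h2 h3; lra.
Qed.
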